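(* Let $(\Xi,\mathcal{F},P)$ be a probability space and $\{y_t\}_{t\in\mathbb{Z}}$ a real, mean-zero, covariance-stationary series on it; put $\mathcal{F}_t=\sigma(y_s,\,s\le t)$. Assume (D1) $P\{y_1^2>0\}=1$; (D2) $y_t=\sum_{s=0}^{\infty}\kappa_s\epsilon_{t-s}$ with $\kappa_0=1$, $\sum_s|\kappa_s|<\infty$, $\kappa(z)=\sum_s\kappa_s z^s\neq 0$ for $|z|\le 1$, where $\{\epsilon_t\}$ is a martingale difference sequence with respect to $\{\mathcal{F}_t\}$; (D3) $E[\epsilon_t^2\mid\mathcal{F}_{t-1}]=\sigma_\epsilon^2$ a.s. (constant); (D4) $\sup_t|\epsilon_t|\le K<\infty$ a.s. Fix $\beta\in[0,1]$, let $\theta_t,\phi_t$ be generated by the recursive algorithm in the context, and assume there are random variables $k^*$ (integer, $0\le k^*<\infty$) and $K^*\in(0,1)$ such that a.s. $|\theta_{t+k^*}|\le K^*$ for all $t\ge1$. Then for each integer $u\ge0$, $$\frac1t\sum_{s=1}^t\phi_s^2=\frac1t\sum_{s=1}^t\Big(\sum_{j=0}^u\kappa_j^\phi(s)\epsilon_{s-j}\Big)^2+r_1(t,u),$$ where almost surely $\lim_{u\to\infty}\limsup_{t\to\infty}|r_1(t,u)|=0$.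
   Context: Recursive algorithm: set $\theta_1=0$, $\bar P_1=0$, $e_1=y_1$, $x_1=y_1$, $\phi_1=x_1$, and for $t\ge2$: $x_t=y_t-\beta\theta_{t-1}x_{t-1}$; $e_t=y_t-\theta_{t-1}e_{t-1}$; $\phi_t=x_t-\theta_{t-1}\phi_{t-1}$; $\bar P_t=\frac1t\sum_{s=1}^{t-1}\phi_s^2$; $\theta_t=\theta_{t-1}+\bar P_t^{-1}\frac1t\phi_{t-1}e_t$. Coefficients: for $t\ge1$, $j\ge0$ (empty products equal 1), $\kappa_j^x(t)=\sum_{l=0}^{\min(j,t-1)}(-\beta)^l\kappa_{j-l}\prod_{i=1}^l\theta_{t-i}$; $\kappa_j^\phi(1)=\kappa_j$ and $\kappa_j^\phi(t)=\kappa_j^x(t)-\theta_{t-1}\kappa_{j-1}^\phi(t-1)$ for $t\ge2$, with $\kappa_{-1}^\phi(\cdot):=0$; these are the coefficients in $\phi_t=\sum_{j\ge0}\kappa_j^\phi(t)\epsilon_{t-j}$. *)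

(* Defs.v *)
From HB Require Import structures.
From mathcomp Require Import all_boot all_algebra.
From mathcomp Require Import all_classical all_reals all_analysis.
From mathcomp Require Import complex.
Set Implicit Arguments. Unset Strict Implicit. Unset Printing Implicit Defensive.
Import GRing.Theory Num.Theory numFieldNormedType.Exports.
Local Open Scope classical_set_scope.
Local Open Scope ring_scope.

Section Algo.
Variable R : realType.

(* state of the recursive algorithm at time t: theta_t, x_t, e_t, phi_t,
   and ss = sum_{s=1}^t phi_s^2 *)
Record st := St { th : R; xx : R; ee : R; ph : R; ss : R }.

(* algo beta y n = state at time t = n+1; y t is y_t for t >= 1 *)
Fixpoint algo (beta : R) (y : nat -> R) (n : nat) : st :=
  match n with
  | 0 => St 0 (y 1%N) (y 1%N) (y 1%N) (y 1%N ^+ 2)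
  | n'.+1 =>
      let p := algo beta y n' in
      let t := n'.+2 in
      let x := y t - beta * th p * xx p in
      let e := y t - th p * ee p in
      let phi := x - th p * ph p in
      let Pbar := ss p / t%:R in            (* (1/t) sum_{s=1}^{t-1} phi_s^2 *)
      let theta := th p + Pbar^-1 * (t%:R^-1 * ph p * e) in
      St theta x e phi (ss p + phi ^+ 2)
  end.

Definition theta beta y (t : nat) : R := th (algo beta y t.-1).
Definition phi beta y (t : nat) : R := ph (algo beta y t.-1).

Definition kx (beta : R) (y : nat -> R) (kappa : nat -> R) (t j : nat) : R :=
  \sum_(0 <= l < (minn j t.-1).+1)
     (- beta) ^+ l * kappa (j - l)%N * \prod_(1 <= i < l.+1) theta beta y (t - i).

(* kphi_aux n j = kappa^phi_j(n+1) *)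
Fixpoint kphi_aux beta y kappa (n j : nat) : R :=
  match n with
  | 0 => kappa j
  | n'.+1 => kx beta y kappa n'.+2 j -
             theta beta y n'.+1 *
             (match j with 0 => 0 | j'.+1 => kphi_aux beta y kappa n' j' end)
  end.

Definition kphi beta y kappa (t j : nat) : R := kphi_aux beta y kappa t.-1 j.

(* kappa(z) = sum_s kappa_s z^s, computed via its real and imaginary parts *)
Definition kappaC (kappa : nat -> R) (z : R[i]) : R[i] :=
  (limn (series (fun s => (kappa s * complex.Re (z ^+ s) : R)))
   +i* limn (series (fun s => (kappa s * complex.Im (z ^+ s) : R))))%C.

End Algo.

Definition Fsig d (T : measurableType d) (R : realType) (y : int -> T -> R)
  (t : int) : set (set T) :=
  <<s \bigcup_(s in [set s : int | (s <= t)%R]) preimage_set_system setT (y s) measurable >>.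

(* Main.v *)
Require Import Defs.
From HB Require Import structures.
From mathcomp Require Import all_boot all_algebra.
From mathcomp Require Import all_classical all_reals all_analysis.
From mathcomp Require Import complex.
From mathcomp Require Import zify ring lra.
Set Implicit Arguments. Unset Strict Implicit. Unset Printing Implicit Defensive.
Import GRing.Theory Num.Theory numFieldNormedType.Exports.
Local Open Scope classical_set_scope.
Local Open Scope ring_scope.
Import order.Order.TTheory.

Definition xs (R : realType) (b : R) y (t : nat) : R := xx (algo b y t.-1).

Lemma xs1 (R : realType) (b : R) y : xs b y 1 = y 1%N.
Proof. by []. Qed.

Lemma xs_rec (R : realType) (b : R) y s :
  xs b y s.+2 = y s.+2 - b * theta b y s.+1 * xs b y s.+1.
Proof. by []. Qed.

Lemma phi_rec (R : realType) (b : R) y s :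
  phi b y s.+2 = xs b y s.+2 - theta b y s.+1 * phi b y s.+1.
Proof. by []. Qed.

Lemma kx0 (R : realType) (b : R) y kappa t : kx b y kappa t 0 = kappa 0%N.
Proof. by rewrite /kx minnC /= big_nat1 expr0 mul1r big_geq // mulr1. Qed.

Lemma kx_rec (R : realType) (b : R) y kappa s j :
  kx b y kappa s.+2 j.+1 = kappa j.+1 - b * theta b y s.+1 * kx b y kappa s.+1 j.
Proof.
rewrite /kx /= minnSS big_nat_recl // expr0 mul1r subn0 big_geq // mulr1.
rewrite mulr_sumr -sumrN; congr (_ + _).
apply: eq_bigr => l _.
rewrite big_nat_recl // subSS exprS /=.
have -> : \prod_(1 <= i < l.+1) theta b y (s.+2 - i.+1) =
          \prod_(1 <= i < l.+1) theta b y (s.+1 - i).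
  by apply: eq_bigr => i _; rewrite subSS.
ring.
Qed.

Lemma kphi0 (R : realType) (b : R) y kappa t : kphi b y kappa t 0 = kappa 0%N.
Proof. by case: t => [|[|t]] //=; rewrite /kphi /= kx0 mulr0 subr0. Qed.

Lemma kphi_rec (R : realType) (b : R) y kappa s j :
  kphi b y kappa s.+2 j.+1 = kx b y kappa s.+2 j.+1 - theta b y s.+1 * kphi b y kappa s.+1 j.
Proof. by []. Qed.

Definition Sm (R : realType) (c : nat -> R) (e : int -> R) (s u : nat) : R :=
  \sum_(0 <= j < u.+1) c j * e (s%:Z - j%:Z).

Lemma Sm_rec (R : realType) (c : nat -> R) e s u :
  Sm c e s.+1 u.+1 = c 0%N * e s.+1 + Sm (fun j => c j.+1) e s u.
Proof.
rewrite /Sm big_nat_recl // subr0; congr (_ + _).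
apply: eq_bigr => j _; congr (_ * e _); lia.
Qed.

Lemma Sm_lin (R : realType) (c d : nat -> R) (a : R) e s u :
  Sm (fun j => c j - a * d j) e s u = Sm c e s u - a * Sm d e s u.
Proof.
rewrite /Sm mulr_sumr -sumrB; apply: eq_bigr => j _; ring.
Qed.

Lemma X_rec (R : realType) (b : R) y kappa e s u :
  Sm (kx b y kappa s.+2) e s.+2 u.+1 =
  Sm kappa e s.+2 u.+1 - b * theta b y s.+1 * Sm (kx b y kappa s.+1) e s.+1 u.
Proof.
rewrite !Sm_rec kx0.
under [Sm (fun j => kx _ _ _ _ j.+1) _ _ _]eq_bigr => j _ do rewrite kx_rec.
rewrite -/(Sm _ _ _ _) (Sm_lin (fun j => kappa j.+1)); ring.
Qed.

Lemma A_rec (R : realType) (b : R) y kappa e s u :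
  Sm (kphi b y kappa s.+2) e s.+2 u.+1 =
  Sm (kx b y kappa s.+2) e s.+2 u.+1 - theta b y s.+1 * Sm (kphi b y kappa s.+1) e s.+1 u.
Proof.
rewrite !Sm_rec kx0 kphi0.
under [Sm (fun j => kphi _ _ _ _ j.+1) _ _ _]eq_bigr => j _ do rewrite kphi_rec.
rewrite -/(Sm _ _ _ _) (Sm_lin (fun j => kx b y kappa s.+2 j.+1)); ring.
Qed.

Lemma Sm0 (R : realType) (c : nat -> R) e s : Sm c e s 0 = c 0%N * e s.
Proof. by rewrite /Sm big_nat1 subr0. Qed.
Fixpoint cv (R : realType) (q M : R) (G : nat -> R) (u : nat) : R :=
  match u with 0 => M | u'.+1 => G u + q * cv q M G u' end.

Lemma iter_bound (R : realType) (E F : nat -> nat -> R) (q : R) (N : nat) (G : nat -> R) (M : R) :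
  0 <= q ->
  (forall s u, (N < s)%N -> `|E s.+1 u.+1| <= `|F s.+1 u.+1| + q * `|E s u|) ->
  (forall s v, (N + v < s)%N -> `|F s v| <= G v) ->
  (forall s, (N < s)%N -> `|E s 0%N| <= M) ->
  forall u s, (N + u < s)%N -> `|E s u| <= cv q M G u.
Proof.
move=> q0 hE hF hM; elim=> [|u IH] s hs /=; first by apply: hM; lia.
case: s hs => [|s] hs; first lia.
apply: le_trans (hE s u _) _; first lia.
apply: lerD; first by apply: hF; lia.
by apply: ler_wpM2l => //; apply: IH; lia.
Qed.

Lemma cv_ge0 (R : realType) (q M : R) (G : nat -> R) : 0 <= q -> 0 <= M -> (forall v, 0 <= G v) ->
  forall u, 0 <= cv q M G u.
Proof.
move=> q0 M0 G0; elim=> [|u IH] //=.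
by apply: addr_ge0 => //; apply: mulr_ge0.
Qed.

Lemma cv_cvg0 (R : realType) (q M : R) (G : nat -> R) : 0 <= q -> q < 1 -> 0 <= M -> (forall v, 0 <= G v) ->
  G @ \oo --> 0 -> cv q M G @ \oo --> 0.
Proof.
move=> q0 q1 M0 G0 HG.
apply/cvgr0Pnorm_le => e e0.
have e'0 : 0 < e / 2 * (1 - q) by apply: mulr_gt0; [apply: divr_gt0 | rewrite subr_gt0].
have [U _ HU] := (cvgr0Pnorm_le G).1 HG _ e'0.
have claim : forall k, cv q M G (U + k) <= e / 2 + q ^+ k * cv q M G U.
  elim=> [|k IH]; first by rewrite addn0 expr0 mul1r lerDr; apply: divr_ge0 => //; apply: ltW.
  rewrite addnS /=.
  have hG : G (U + k).+1 <= e / 2 * (1 - q).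
    by apply: le_trans (ler_norm _) _; apply: HU => /=; lia.
  have : q * cv q M G (U + k) <= q * (e / 2 + q ^+ k * cv q M G U) by apply: ler_wpM2l.
  rewrite exprS; move: hG; set a := e / 2; set c := q ^+ k * cv q M G U.
  rewrite -mulrA -/c. nra.
have hq : (fun k => q ^+ k * cv q M G U) @ \oo --> 0.
  rewrite -(mul0r (cv q M G U)); apply: cvgMl; apply: cvg_expr.
  by rewrite ger0_norm.
have e2 : 0 < e / 2 by apply: divr_gt0.
have [K _ HK] := (cvgr0Pnorm_le _).1 hq _ e2.
exists (U + K)%N => // n /= hn.
rewrite ger0_norm; last exact: cv_ge0.
have -> : n = (U + (n - U))%N by lia.
apply: le_trans (claim _) _.
have := HK (n - U)%N; rewrite /= => /(_ ltac:(lia)) h.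
have := ler_norm (q ^+ (n - U) * cv q M G U).
have -> : e = e / 2 + e / 2 by field.
lra.
Qed.

Lemma bnd_seq (R : realType) (a : nat -> R) (A q : R) (N : nat) :
  0 <= A -> 0 <= q -> q < 1 ->
  (forall s, (N < s)%N -> `|a s.+1| <= A + q * `|a s|) ->
  exists M, 0 <= M /\ forall s, (N < s)%N -> `|a s| <= M.
Proof.
move=> A0 q0 q1 ha.
have q1' : 0 < 1 - q by rewrite subr_gt0.
set D := A / (1 - q).
have D0 : 0 <= D by apply: divr_ge0 => //; apply: ltW.
have hD : A + q * D = D by rewrite /D; field; rewrite subr_eq0 eq_sym lt_eqF.
exists (`|a N.+1| + D); split; first by apply: addr_ge0.
suff H : forall k, `|a (N.+1 + k)%N| <= `|a N.+1| + D.
  by move=> s hs; have -> : s = (N.+1 + (s - N.+1))%N by lia.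
elim=> [|k IH]; first by rewrite addn0 lerDl.
rewrite addnS; apply: le_trans (ha _ _) _; first lia.
have := ler_wpM2l q0 IH.
have := normr_ge0 (a N.+1).
nra.
Qed.

Lemma Sm_tail (R : realType) (kappa : nat -> R) (e : int -> R) (K : R) (s : nat) (yv : R) (u : nat) :
  cvg (series (fun j => `|kappa j|) @ \oo) ->
  (forall t, `|e t| <= K) ->
  series (fun j => kappa j * e (s%:Z - j%:Z)) @ \oo --> yv ->
  `|yv - \sum_(0 <= j < u.+1) kappa j * e (s%:Z - j%:Z)| <=
    K * (limn (series (fun j => `|kappa j|)) - series (fun j => `|kappa j|) u.+1).
Proof.
move=> hk he hs.
set Y := \sum_(0 <= j < u.+1) _.
have hc : (fun n => `|series (fun j => kappa j * e (s%:Z - j%:Z)) n - Y|) @ \oo --> `|yv - Y|.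
  by apply: cvg_norm; apply: cvgB => //; apply: cvg_cst.
rewrite -(cvg_lim _ hc) //.
apply: limr_le; first by apply/cvg_ex; exists `|yv - Y|.
exists u.+1 => // n /= hn.
rewrite /series /= (big_cat_nat (leq0n u.+1) hn) /= -/Y addrAC subrr add0r.
apply: le_trans (ler_norm_sum _ _ _) _.
have hmon : {homo series (fun j => `|kappa j|) : n m / (n <= m)%N >-> n <= m}.
  by apply: nondecreasing_series => j _ _.
have hle := nondecreasing_cvgn_le hmon hk n.
have K0 : 0 <= K by apply: le_trans (he 0) .
apply: le_trans (_ : K * (series (fun j => `|kappa j|) n - series (fun j => `|kappa j|) u.+1) <= _); last first.
  by apply: ler_wpM2l => //; apply: lerB.
rewrite /series /= (big_cat_nat (leq0n u.+1) hn) /= addrC addrK mulr_sumr.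
apply: ler_sum => j _; rewrite normrM mulrC; apply: ler_wpM2r => //.
Qed.
Lemma limn_esup_le (R : realType) (u v : (\bar R)^nat) :
  (forall n, (u n <= v n)%E) -> (limn_esup u <= limn_esup v)%E.
Proof.
move=> uv; rewrite !limn_esup_lim; apply: lee_lim; [exact: is_cvg_esups|exact: is_cvg_esups|].
apply: nearW => n; apply: ge_ereal_sup => _ [k /= nk <-].
by apply: le_trans (uv k) _; apply: ereal_sup_ubound; exists k.
Qed.

Lemma sum_trunc (R : realType) (D : nat -> R) m M t :
  (forall s, 0 <= D s) ->
  \sum_(m <= s < t) (if (s < M)%N then D s else 0) <= \sum_(m <= s < M) D s.
Proof.
move=> D0.
rewrite -big_mkcond /= (big_nat_widen _ _ (t + M)) ?leq_addr //.
rewrite [X in _ <= X](big_nat_widen _ _ (t + M)) ?leq_addl //.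
rewrite [X in X <= _]big_mkcond [X in _ <= X]big_mkcond /=.
apply: ler_sum => s _; case: (s < M)%N => //=; case: (s < t)%N => //.
Qed.

Lemma inv_cvg0 (R : realType) : (fun t : nat => (t%:R : R)^-1) @ \oo --> 0.
Proof. rewrite -cvg_shiftS; exact: cvg_harmonic. Qed.

Lemma alg1 (R : realType) (a c d f g : R) : (a - c * d) - (f - c * g) = (a - f) - c * (d - g).
Proof. ring. Qed.
Lemma alg2 (R : realType) (p E : R) : p ^+ 2 - (p - E) ^+ 2 = E * (2 * p - E).
Proof. ring. Qed.
Lemma alg3 (R : realType) (p E : R) : E = p - (p - E).
Proof. ring. Qed.

Lemma det (R : realType) (b : R) (ys : nat -> R) (e : int -> R) (kappa : nat -> R) (K : R) :
  0 <= b <= 1 ->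
  cvg (series (fun s => `|kappa s|) @ \oo) ->
  (forall t, `|e t| <= K) ->
  (forall s : nat, series (fun j => kappa j * e (s%:Z - j%:Z)) @ \oo --> ys s) ->
  (exists (ks : nat) (Ks : R), 0 < Ks < 1 /\
      forall t : nat, (1 <= t)%N -> `|theta b ys (t + ks)| <= Ks) ->
  (fun u => limn_esup (fun t => (`|t%:R^-1 * (\sum_(1 <= s < t.+1) phi b ys s ^+ 2)
       - t%:R^-1 * (\sum_(1 <= s < t.+1)
            (\sum_(0 <= j < u.+1) kphi b ys kappa s j * e (s%:Z - j%:Z)) ^+ 2)|)%:E)) @ \oo --> 0%E.
Proof.
move=> /andP[b0 b1] hk he hs [N [q [/andP[q0 q1] hth]]].
have q0' := ltW q0.
have hth' : forall s, (N < s)%N -> `|theta b ys s| <= q.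
  move=> s hs'; have -> : s = ((s - N) + N)%N by rewrite subnK // ltnW.
  by apply: hth; rewrite subn_gt0.
have hbth : forall s, (N < s)%N -> `|b * theta b ys s| <= q.
  move=> s hs'; rewrite normrM (ger0_norm b0).
  have := hth' s hs'; have := normr_ge0 (theta b ys s); nra.
have K0 : 0 <= K by apply: le_trans (he 0).
set S := series (fun j => `|kappa j|).
set rho := limn S.
set g := fun u : nat => K * (rho - S u.+1).
have hmon : {homo S : n m / (n <= m)%N >-> n <= m}.
  by apply: nondecreasing_series => j _ _.
have g0 : forall u, 0 <= g u.
  move=> u; apply: mulr_ge0 => //; rewrite subr_ge0; exact: nondecreasing_cvgn_le.
have gc : g @ \oo --> 0.
  rewrite -(mulr0 K) -(subrr rho); apply: cvgMr.
  apply: cvgB; first exact: cvg_cst.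
  by rewrite (cvg_shiftS S); apply: hk.
pose Ey s u := ys s - Sm kappa e s u.
have hEy : forall s u, `|Ey s u| <= g u := fun s u => Sm_tail u hk he (hs s).
pose A := `|kappa 0%N| * K + g 0%N.
have A0 : 0 <= A by apply: addr_ge0 => //; apply: mulr_ge0.
have hke : forall s : nat, `|kappa 0%N * e s| <= `|kappa 0%N| * K.
  by move=> s; rewrite normrM; apply: ler_wpM2l.
have hy : forall s, `|ys s| <= A.
  move=> s; have h1 := hEy s 0%N; rewrite /Ey Sm0 in h1.
  rewrite -[ys s](subrK (kappa 0%N * e s)).
  apply: le_trans (ler_normD _ _) _; rewrite /A addrC; apply: lerD => //.
have hxr : forall s, (N < s)%N -> `|xs b ys s.+1| <= A + q * `|xs b ys s|.
  move=> s hs'; case: s hs' => [|s] hs'; first by rewrite ltn0 in hs'.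
  rewrite xs_rec; apply: le_trans (ler_normB _ _) _; apply: lerD; first exact: hy.
  rewrite normrM; apply: ler_wpM2r => //; exact: hbth.
have [Mx [Mx0 hMx]] := bnd_seq A0 q0' q1 hxr.
have hpr : forall s, (N < s)%N -> `|phi b ys s.+1| <= Mx + q * `|phi b ys s|.
  move=> s hs'; case: s hs' => [|s] hs'; first by rewrite ltn0 in hs'.
  rewrite phi_rec; apply: le_trans (ler_normB _ _) _; apply: lerD; first by apply: hMx; exact: ltn_trans hs' (ltnSn _).
  rewrite normrM; apply: ler_wpM2r => //; exact: hth'.
have [Mp [Mp0 hMp]] := bnd_seq Mx0 q0' q1 hpr.
pose Ex s u := xs b ys s - Sm (kx b ys kappa s) e s u.
have hExr : forall s u, (N < s)%N -> `|Ex s.+1 u.+1| <= `|Ey s.+1 u.+1| + q * `|Ex s u|.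
  move=> s u hs'; case: s hs' => [|s] hs'; first by rewrite ltn0 in hs'.
  have -> : Ex s.+2 u.+1 = Ey s.+2 u.+1 - b * theta b ys s.+1 * Ex s.+1 u.
    by rewrite /Ex /Ey xs_rec X_rec alg1.
  apply: le_trans (ler_normB _ _) _; apply: lerD => //.
  rewrite normrM; apply: ler_wpM2r => //; exact: hbth.
pose Mx1 := Mx + `|kappa 0%N| * K.
have hEx0 : forall s, (N < s)%N -> `|Ex s 0%N| <= Mx1.
  move=> s hs'; rewrite /Ex Sm0 kx0; apply: le_trans (ler_normB _ _) _.
  by apply: lerD => //; apply: hMx.
have hExb := iter_bound q0' hExr (fun s v _ => hEy s v) hEx0.
pose Ep s u := phi b ys s - Sm (kphi b ys kappa s) e s u.
have hEpr : forall s u, (N < s)%N -> `|Ep s.+1 u.+1| <= `|Ex s.+1 u.+1| + q * `|Ep s u|.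
  move=> s u hs'; case: s hs' => [|s] hs'; first by rewrite ltn0 in hs'.
  have -> : Ep s.+2 u.+1 = Ex s.+2 u.+1 - theta b ys s.+1 * Ep s.+1 u.
    by rewrite /Ex /Ep phi_rec A_rec alg1.
  apply: le_trans (ler_normB _ _) _; apply: lerD => //.
  rewrite normrM; apply: ler_wpM2r => //; exact: hth'.
pose Mp1 := Mp + `|kappa 0%N| * K.
have hEp0 : forall s, (N < s)%N -> `|Ep s 0%N| <= Mp1.
  move=> s hs'; rewrite /Ep Sm0 kphi0; apply: le_trans (ler_normB _ _) _.
  by apply: lerD => //; apply: hMp.
have hEpb := iter_bound q0' hEpr (fun s v h => hExb v s h) hEp0.
pose h := cv q Mp1 (cv q Mx1 g).
have Mx10 : 0 <= Mx1 by apply: addr_ge0 => //; apply: mulr_ge0.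
have Mp10 : 0 <= Mp1 by apply: addr_ge0 => //; apply: mulr_ge0.
have h0 : forall u, 0 <= h u.
  by apply: cv_ge0 => // v; apply: cv_ge0.
have hc : h @ \oo --> 0.
  apply: cv_cvg0 => //; first by move=> v; apply: cv_ge0.
  exact: cv_cvg0.
pose H u := h u * (2 * Mp + h u).
have H0 : forall u, 0 <= H u.
  move=> u; apply: mulr_ge0 => //; apply: addr_ge0 => //; apply: mulr_ge0 => //.
have Hc : H @ \oo --> 0.
  have := cvgM hc (cvgD (cvg_cst (2 * Mp)) hc); rewrite mul0r; exact.
pose D s u := `|phi b ys s ^+ 2 - Sm (kphi b ys kappa s) e s u ^+ 2|.
have hD : forall u s, (N + u < s)%N -> D s u <= H u.
  move=> u s hs'.
  have hE := hEpb u s hs'.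
  have hp : `|phi b ys s| <= Mp by apply: hMp; exact: leq_ltn_trans (leq_addr u N) hs'.
  rewrite /D [Sm _ _ _ _](alg3 (phi b ys s)) -/(Ep s u) alg2.
  rewrite normrM /H; apply: ler_pM => //.
  apply: le_trans (ler_normB _ _) _; apply: lerD => //.
  by rewrite normrM ger0_norm //; apply: ler_wpM2l.
pose Cu u := \sum_(1 <= s < (N + u).+1) D s u.
have hsum : forall t u, \sum_(1 <= s < t.+1) D s u <= H u *+ t + Cu u.
  move=> t u.
  apply: le_trans (_ : \sum_(1 <= s < t.+1) (H u + (if (s < (N + u).+1)%N then D s u else 0)) <= _).
    apply: ler_sum => s _; case: ifP => hs'.
      by rewrite lerDr.
    by rewrite addr0; apply: hD; rewrite ltnNge -ltnS hs'.
  rewrite big_split /= sumr_const_nat subn1 /=; apply: lerD => //.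
  by apply: sum_trunc => s; apply: normr_ge0.
have hr : forall t u, `|t%:R^-1 * (\sum_(1 <= s < t.+1) phi b ys s ^+ 2)
       - t%:R^-1 * (\sum_(1 <= s < t.+1)
            (\sum_(0 <= j < u.+1) kphi b ys kappa s j * e (s%:Z - j%:Z)) ^+ 2)| <= Cu u * t%:R^-1 + H u.
  move=> [|t] u.
    by rewrite invr0 !mul0r subr0 normr0 mulr0 add0r.
  rewrite -mulrBr -sumrB normrM ger0_norm ?invr_ge0 //.
  have hi : t.+1%:R^-1 * t.+1%:R = 1 :> R by rewrite mulVf // pnatr_eq0.
  apply: le_trans (_ : t.+1%:R^-1 * (H u *+ t.+1 + Cu u) <= _).
    apply: ler_wpM2l; first by rewrite invr_ge0.
    apply: le_trans (hsum t.+1 u); apply: le_trans (ler_norm_sum _ _ _) _.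
    by apply: ler_sum => s _; rewrite /D /Sm.
  by rewrite mulrDr mulrnAr -mulr_natr mulrAC hi mul1r addrC mulrC.
apply: (@squeeze_cvge _ _ _ _ (fun _ => 0%E) _ (fun u => (H u)%:E)); last 2 first.
- exact: cvg_cst.
- by apply: cvg_EFin; [exact: nearW | exact: Hc].
apply: nearW => u; apply/andP; split.
  have := limn_esup_le (u := fun _ => 0%E) (v := fun t => (`|t%:R^-1 * (\sum_(1 <= s < t.+1) phi b ys s ^+ 2)
       - t%:R^-1 * (\sum_(1 <= s < t.+1)
            (\sum_(0 <= j < u.+1) kphi b ys kappa s j * e (s%:Z - j%:Z)) ^+ 2)|)%:E).
  by rewrite (cvg_limn_einf_sup (cvg_cst 0%E)).2; apply => n; rewrite lee_fin.
have := limn_esup_le (v := fun t => (Cu u * t%:R^-1 + H u)%:E) (u := fun t => (`|t%:R^-1 * (\sum_(1 <= s < t.+1) phi b ys s ^+ 2)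
       - t%:R^-1 * (\sum_(1 <= s < t.+1)
            (\sum_(0 <= j < u.+1) kphi b ys kappa s j * e (s%:Z - j%:Z)) ^+ 2)|)%:E).
rewrite (cvg_limn_einf_sup (u := fun t : nat => (Cu u * t%:R^-1 + H u)%:E) (l := (H u)%:E) _).2; first by apply => n; rewrite lee_fin.
apply: cvg_EFin; first exact: nearW.
rewrite -[X in _ --> X]add0r; apply: cvgD; last exact: cvg_cst.
rewrite -(mulr0 (Cu u)); apply: cvgMr; exact: inv_cvg0.
Qed.
Theorem lemma4p2 (d : measure_display) (T : measurableType d) (R : realType)
  (P : probability T R)
  (y eps : int -> T -> R) (kappa : nat -> R) (sigma2 : R) (beta : R) :
  (* {y_t} real, mean-zero, covariance-stationary *)
  (forall t, measurable_fun setT (y t)) ->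
  (forall t, P.-integrable setT (fun w => ((y t w) ^+ 2)%:E)) ->
  (forall t, ('E_P[y t] = 0)%E) ->
  (forall t h, ('E_P[fun w => (y t w * y (t + h) w)%R] = 'E_P[fun w => (y 0 w * y h w)%R])%E) ->
  (* (D1) *)
  P [set w | 0 < y 1 w ^+ 2] = 1%E ->
  (* (D2) *)
  kappa 0%N = 1 ->
  cvg (series (fun s => `|kappa s|) @ \oo) ->
  (forall z : R[i], `|z| <= 1 -> kappaC kappa z != 0) ->
  {ae P, forall w, forall t : int,
      series (fun s => kappa s * eps (t - s%:Z) w) @ \oo --> y t w} ->
  (* {eps_t} is a martingale difference sequence w.r.t. F_t = sigma(y_s, s <= t) *)
  (forall t B, measurable B -> Fsig y t (eps t @^-1` B)) ->
  (forall t, P.-integrable setT (fun w => (eps t w)%:E)) ->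
  (forall t A, Fsig y (t - 1) A -> (\int[P]_(w in A) (eps t w)%:E = 0)%E) ->
  (* (D3) *)
  (forall t A, Fsig y (t - 1) A ->
     (\int[P]_(w in A) ((eps t w) ^+ 2)%:E = sigma2%:E * P A)%E) ->
  (* (D4) *)
  (exists K : R, {ae P, forall w, forall t, `|eps t w| <= K}) ->
  (* beta in [0,1] *)
  0 <= beta <= 1 ->
  (* a.s. |theta_{t+k*}| <= K* for all t >= 1, some 0 <= k* < oo, K* in (0,1) *)
  {ae P, forall w, exists (ks : nat) (Ks : R), 0 < Ks < 1 /\
      forall t : nat, (1 <= t)%N ->
        `|theta beta (fun s : nat => y s%:Z w) (t + ks)| <= Ks} ->
  (* conclusion: a.s. lim_{u -> oo} limsup_{t -> oo} |r_1(t,u)| = 0 *)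
  {ae P, forall w,
     let ys := fun s : nat => y s%:Z w in
     let r1 := fun (t u : nat) =>
       t%:R^-1 * (\sum_(1 <= s < t.+1) phi beta ys s ^+ 2)
       - t%:R^-1 * (\sum_(1 <= s < t.+1)
            (\sum_(0 <= j < u.+1) kphi beta ys kappa s j * eps (s%:Z - j%:Z) w) ^+ 2) in
     (fun u => limn_esup (fun t => (`|r1 t u|)%:E)) @ \oo --> 0%E}.
Proof.
move=> _ _ _ _ _ _ hk _ hser _ _ _ _ [K hK] hb hth.
move: hser hK hth; rewrite /prop_near1 => hser hK hth.
apply: (@filterS3 _ (almost_everywhere P) (ae_filter_ringOfSetsType P) _ _ _ _ _ hser hK hth) => w hs1 hK1 hth1 /=.
have hs2 : forall s : nat, series (fun j => kappa j * (fun t => eps t w) (s%:Z - j%:Z)) @ \oo --> (fun s : nat => y s%:Z w) s.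
  by move=> s; exact: hs1 s%:Z.
exact: (det (b := beta) (ys := fun s : nat => y s%:Z w) (e := fun t => eps t w) (kappa := kappa) (K := K) hb hk hK1 hs2 hth1).
Qed.
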